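(* Let $G=(V,E,p,(V_{E},V_{O}))$ be a parity game and let $\rho: V\to\mathbb{M}$ be a game parity progress measure of $G$. Then for every vertex $v\in V$ there is a positional strategy $\sigma_{E}$ of player Even such that every play $\pi$ starting in $v$ and consistent with $\sigma_{E}$ satisfies $\theta(\pi)\le\rho(v)$.
   Context: A parity game $G=(V,E,p,(V_{E},V_{O}))$ consists of a finite set $V$ of vertices partitioned into $V_{E}$ (owned by player Even) and $V_{O}$ (owned by player Odd), a total edge relation $E\subseteq V\times V$ (every vertex has a successor), and a priority function $p:V\to\mathbb{N}$. Write $\mathrm{post}(v)=\{w:(v,w)\in E\}$ and $V_i=\{v: p(v)=i\}$. A play is an infinite path $\pi=\pi_0\pi_1\cdots$ in the graph; Even wins it iff the least priority occurring infinitely often is even, otherwise Odd wins it. A strategy of player $X$ is a partial function $\sigma:V^+\to V$, defined only on finite paths $u_1\cdots u_n$ with $u_n$ owned by $X$, and then $\sigma(u_1\cdots u_n)\in\mathrm{post}(u_n)$; it is positional if its value depends only on the last vertex. A play is consistent with $\sigma$ if $u_{n+1}=\sigma(u_1\cdots u_n)$ whenever the latter is defined. Let $d$ be one more than the largest priority in $G$. $\mathbb{M}$ is the set consisting of an extra element $\top$ together with all tuples $(m_0,\dots,m_{d-1})\in\mathbb{N}^d$ with $m_i=0$ for even $i$ and $m_i\le|V_i|$ for odd $i$; $\mathbb{M}_{ext}$ is $\{\top\}$ together with all tuples in $\mathbb{N}^d$ that are $0$ at even positions. Tuples are ordered lexicographically and $\top$ is strictly greater than every tuple. For a position $i$, $m<_i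 m'$ means $(m_0,\dots,m_i)<(m'_0,\dots,m'_i)$ lexicographically (with $\alpha<_i\top$ for tuples $\alpha$ and $\top=_i\top$), and $m=_i m'$ means the tuples agree on positions $0,\dots,i$; $\le_i,\ge_i,>_i$ are derived accordingly. For $\rho:V\to\mathbb{M}$ and $w\in\mathrm{post}(v)$, $\mathrm{Prog}(\rho,v,w)$ is the least $m\in\mathbb{M}$ such that $m\ge_{p(v)}\rho(w)$ if $p(v)$ is even, and such that $m>_{p(v)}\rho(w)$ or $m=\rho(w)=\top$ if $p(v)$ is odd. $\rho$ is a game parity progress measure if for every $v\in V_{E}$ there is $w\in\mathrm{post}(v)$ with $\rho(v)\ge_{p(v)}\mathrm{Prog}(\rho,v,w)$, and for every $v\in V_{O}$ and all $w\in\mathrm{post}(v)$, $\rho(v)\ge_{p(v)}\mathrm{Prog}(\rho,v,w)$. Play value: a stretch of a play is a finite contiguous subsequence; for a priority $k$, a $k$-dominated stretch is one whose minimal priority is $k$, and its degree is the number of its vertices of priority $k$. The value $\theta(\pi)\in\mathbb{M}_{ext}$ of a play $\pi$ is $\top$ if Odd wins $\pi$; otherwise it is the tuple which is $0$ at even positions and whose entry at each odd position $i$ is the degree of the maximal $i$-dominated stretch that is a prefix of $\pi$ (and $0$ if no prefix is $i$-dominated). *)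

(* Defs.v *)
From mathcomp Require Import all_boot all_order.
Set Implicit Arguments. Unset Strict Implicit. Unset Printing Implicit Defensive.

(** Elements of M_ext: [Top] is the extra element ⊤; [Tup f] is the tuple
    (f 0, ..., f (d-1)).  To make the representation canonical, positions
    >= d are required to be 0 (see [inMext]). *)
Inductive mval := Top | Tup of (nat -> nat).

Section ParityGame.
Variables (V : finType) (E : rel V) (isEven : pred V) (p : V -> nat).
(* V_E = [isEven], V_O = complement of [isEven]. *)

Definition dd : nat := (\max_(v : V) p v).+1.

Definition cardVi (i : nat) : nat := #|[set v : V | p v == i]|.

Definition inMext (m : mval) : Prop :=
  match m with
  | Top => True
  | Tup f => forall i, (~~ odd i \/ dd <= i) -> f i = 0
  end.

Definition inM (m : mval) : Prop :=
  inMext m /\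
  match m with
  | Top => True
  | Tup f => forall i, odd i -> i < dd -> f i <= cardVi i
  end.

Definition lt_upto (i : nat) (f g : nat -> nat) : Prop :=
  exists j, j <= i /\ (forall k, k < j -> f k = g k) /\ f j < g j.
Definition eq_upto (i : nat) (f g : nat -> nat) : Prop :=
  forall k, k <= i -> f k = g k.

Definition mlt (i : nat) (m m' : mval) : Prop :=
  match m, m' with
  | Tup f, Tup g => lt_upto i f g
  | Tup _, Top => True
  | Top, _ => False
  end.
Definition meq (i : nat) (m m' : mval) : Prop :=
  match m, m' with
  | Tup f, Tup g => eq_upto i f g
  | Top, Top => True
  | _, _ => False
  end.
Definition mle (i : nat) (m m' : mval) : Prop := mlt i m m' \/ meq i m m'.

Definition mle_full (m m' : mval) : Prop := mle dd.-1 m m'.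

Definition prog_cond (rho : V -> mval) (v w : V) (m : mval) : Prop :=
  if ~~ odd (p v) then mle (p v) (rho w) m
  else mlt (p v) (rho w) m \/ (m = Top /\ rho w = Top).

Definition is_Prog (rho : V -> mval) (v w : V) (m : mval) : Prop :=
  inM m /\ prog_cond rho v w m /\
  forall m', inM m' -> prog_cond rho v w m' -> mle_full m m'.

Definition game_progress_measure (rho : V -> mval) : Prop :=
  (forall v, inM (rho v)) /\
  (forall v, isEven v ->
     exists2 w, E v w & forall m, is_Prog rho v w m -> mle (p v) m (rho v)) /\
  (forall v, ~~ isEven v ->
     forall w, E v w -> forall m, is_Prog rho v w m -> mle (p v) m (rho v)).

Definition is_play (pi : nat -> V) : Prop := forall n, E (pi n) (pi n.+1).

(** positional strategy of Even (only its values on Even vertices matter) *)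
Definition positional_strategy_E (sigma : V -> V) : Prop :=
  forall v, isEven v -> E v (sigma v).

Definition consistent_E (sigma : V -> V) (pi : nat -> V) : Prop :=
  forall n, isEven (pi n) -> pi n.+1 = sigma (pi n).

Definition inf_often (pi : nat -> V) (k : nat) : Prop :=
  forall N, exists n, N <= n /\ p (pi n) = k.

Definition even_wins (pi : nat -> V) : Prop :=
  exists k, inf_often pi k /\ ~~ odd k /\ forall k', inf_often pi k' -> k <= k'.

Definition odd_wins (pi : nat -> V) : Prop := ~ even_wins pi.

Definition idom_prefix (pi : nat -> V) (i n : nat) : Prop :=
  0 < n /\ (exists k, k < n /\ p (pi k) = i) /\ (forall k, k < n -> i <= p (pi k)).

Definition degree (pi : nat -> V) (i n : nat) : nat :=
  count (fun k => p (pi k) == i) (iota 0 n).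

Definition theta_entry (pi : nat -> V) (i c : nat) : Prop :=
  (exists n, idom_prefix pi i n /\ degree pi i n = c /\
     forall n', idom_prefix pi i n' -> degree pi i n' <= c)
  \/ ((forall n, ~ idom_prefix pi i n) /\ c = 0).

Definition is_theta (pi : nat -> V) (t : mval) : Prop :=
  (odd_wins pi /\ t = Top) \/
  (~ odd_wins pi /\ exists f, t = Tup f /\
      (forall i, odd i -> i < dd -> theta_entry pi i (f i)) /\
      (forall i, (~~ odd i \/ dd <= i) -> f i = 0)).

End ParityGame.

(* Main.v *)
Require Import Defs.
From mathcomp Require Import all_boot all_order zify.
From Stdlib Require Import Classical ClassicalEpsilon.
Set Implicit Arguments. Unset Strict Implicit. Unset Printing Implicit Defensive.

Definition le_upto (i : nat) (f g : nat -> nat) : Prop := lt_upto i f g \/ eq_upto i f g.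

Lemma ex_min_prop (P : nat -> Prop) : (exists n, P n) -> exists n, P n /\ forall m, P m -> n <= m.
Proof.
move=> [n Pn]; elim/ltn_ind: n Pn => n IH Pn.
case: (classic (exists m, P m /\ m < n)) => [[m [Pm lt]]|H]; first exact: IH m lt Pm.
exists n; split=> // m Pm; rewrite leqNgt; apply/negP => lt; apply: H; by exists m.
Qed.

Lemma ex_max_prop (P : nat -> Prop) B : (exists c, P c) -> (forall c, P c -> c <= B) ->
  exists c, P c /\ forall c', P c' -> c' <= c.
Proof.
move=> [c Pc] HB.
have [d [[c0 [Pc0 ->]] Hm]] := @ex_min_prop (fun d => exists c, P c /\ d = B - c) (ex_intro _ (B - c) (ex_intro _ c (conj Pc erefl))).
exists c0; split=> // c' Pc'.
have := Hm (B - c') (ex_intro _ c' (conj Pc' erefl)).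
have := HB _ Pc'; have := HB _ Pc0. lia.
Qed.

Lemma lt_trans_u i f g h : lt_upto i f g -> lt_upto i g h -> lt_upto i f h.
Proof.
move=> [d1 [d1i [A1 B1]]] [d2 [d2i [A2 B2]]].
case: (ltngtP d1 d2) => c.
- exists d1; split=> //; split; last by rewrite -(A2 _ c).
  move=> k kd; rewrite A1 // A2 //; lia.
- exists d2; split=> //; split; last by rewrite (A1 _ c).
  move=> k kd; rewrite A1 ?A2 //; lia.
- subst; exists d2; split=> //; split; last lia.
  move=> k kd; by rewrite A1 ?A2.
Qed.

Lemma lt_eq_u i f g h : lt_upto i f g -> eq_upto i g h -> lt_upto i f h.
Proof.
move=> [d [di [A B]]] E; exists d; split=> //; split; last by rewrite -E.
move=> k kd; rewrite A // E //; lia.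
Qed.

Lemma eq_lt_u i f g h : eq_upto i f g -> lt_upto i g h -> lt_upto i f h.
Proof.
move=> E [d [di [A B]]]; exists d; split=> //; split; last by rewrite E.
move=> k kd; rewrite E ?A //; lia.
Qed.

Lemma eq_eq_u i f g h : eq_upto i f g -> eq_upto i g h -> eq_upto i f h.
Proof. by move=> E1 E2 k ki; rewrite E1 ?E2. Qed.

Lemma le_trans_u i f g h : le_upto i f g -> le_upto i g h -> le_upto i f h.
Proof.
move=> [A|A] [B|B].
- left; exact: lt_trans_u A B.
- left; exact: lt_eq_u A B.
- left; exact: eq_lt_u A B.
- right; exact: eq_eq_u A B.
Qed.

Lemma lt_le_u i f g h : lt_upto i f g -> le_upto i g h -> lt_upto i f h.
Proof. move=> A [B|B]; [exact: lt_trans_u A B | exact: lt_eq_u A B]. Qed.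

Lemma le_lt_u i f g h : le_upto i f g -> lt_upto i g h -> lt_upto i f h.
Proof. move=> [A|A] B; [exact: lt_trans_u A B | exact: eq_lt_u A B]. Qed.

Lemma le_mono i q f g : le_upto q f g -> i <= q -> le_upto i f g.
Proof.
move=> [[d [dq [A B]]]|E] iq.
- case: (leqP d i) => di.
  + by left; exists d.
  + right=> k ki; apply: A; lia.
- right=> k ki; apply: E; lia.
Qed.

Lemma P0 i h x : (forall k, k <= i -> h k <= x k) -> le_upto i h x.
Proof.
move=> H.
case: (classic (exists k, k <= i /\ h k <> x k)) => [Ex|NE].
- have [d [[di dn] Dm]] := ex_min_prop Ex.
  left; exists d; split=> //; split.
  + move=> k kd; case: (eqVneq (h k) (x k)) => [//|/eqP ne].
    have := Dm k (conj (ltnW (leq_trans kd di)) ne); lia.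
  + have := H d di; lia.
- right=> k ki; case: (eqVneq (h k) (x k)) => [//|/eqP ne].
  exfalso; apply: NE; by exists k.
Qed.

Lemma lemB q i h x : le_upto q h x -> q < i -> (forall k, q < k <= i -> h k <= x k) -> le_upto i h x.
Proof.
move=> [[d [dq [A B]]]|E] qi H.
- left; exists d; split=> //; lia.
- apply: P0 => k ki; case: (leqP k q) => kq; first by rewrite E.
  apply: H; lia.
Qed.

Lemma ext_u i h x y : eq_upto i x y -> le_upto i h x -> le_upto i h y.
Proof.
move=> E [A|A].
- left; exact: lt_eq_u A E.
- right; exact: eq_eq_u A E.
Qed.

Definition add_at (i c : nat) (f : nat -> nat) : nat -> nat :=
  fun k => if k == i then f k + c else f k.

Lemma add_mono i c f g : le_upto i f g -> le_upto i (add_at i c f) (add_at i c g).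
Proof.
rewrite /add_at.
move=> [[d [di [A B]]]|E].
- left; exists d; split=> //; split.
  + move=> k kd; have -> : (k == i) = false by apply/eqP; lia.
    exact: A.
  + case: (d == i); lia.
- right=> k ki; rewrite E //.
Qed.

Lemma lt_add i c f g : lt_upto i f g -> le_upto i (add_at i c.+1 f) (add_at i c g).
Proof.
rewrite /add_at.
move=> [d [di [A B]]].
case: (ltnP d i) => dlt.
- left; exists d; split=> //; split.
  + move=> k kd; have -> : (k == i) = false by apply/eqP; lia.
    exact: A.
  + have -> : (d == i) = false by apply/eqP; lia. done.
- have di' : d = i by lia. subst d.
  case: (ltngtP (f i + c.+1) (g i + c)) => c1.
  + left; exists i; split=> //; split; last by rewrite eqxx.
    move=> k kd; have -> : (k == i) = false by apply/eqP; lia.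
    exact: A.
  + lia.
  + right=> k ki /=; case: (eqVneq k i) => [->|ne] //.
    apply: A; move/eqP: ne; lia.
Qed.

Lemma coord_mono q j f g : le_upto q f g -> j <= q -> (forall c, c < j -> f c = g c) -> f j <= g j.
Proof.
move=> [[d [dq [A B]]]|E] jq H.
- case: (ltngtP d j) => c.
  + by rewrite H in B; [lia|].
  + by rewrite A.
  + subst; lia.
- by rewrite E.
Qed.
Lemma lexmin (S : (nat -> nat) -> Prop) j : (exists f, S f) ->
  exists2 f, S f & forall g, S g -> le_upto j f g.
Proof.
move=> ne; elim: j => [|j [f Sf Hf]].
- have [c [[f0 [Sf0 <-]] Hm]] := ex_min_prop (P := fun c => exists f, S f /\ f 0 = c)
    (let: ex_intro f Sf := ne in ex_intro _ (f 0) (ex_intro _ f (conj Sf erefl))).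
  exists f0 => // g Sg.
  have := Hm (g 0) (ex_intro _ g (conj Sg erefl)).
  rewrite leq_eqVlt => /orP [/eqP E|lt].
  + right=> k; rewrite leqn0 => /eqP ->; done.
  + left; exists 0; split=> //; split=> // k; by rewrite ltn0.
- have [c [[f' [Sf' [Ef' <-]]] Hm]] := ex_min_prop
    (P := fun c => exists g, S g /\ eq_upto j f g /\ g j.+1 = c)
    (ex_intro _ (f j.+1) (ex_intro _ f (conj Sf (conj (fun k _ => erefl) erefl)))).
  exists f' => // g Sg.
  case: (Hf g Sg) => [[d [dj [A B]]]|E].
  + left; exists d; split; first lia. split; last by rewrite -Ef'; [|lia].
    move=> k kd; rewrite -Ef' ?A //; lia.
  + have := Hm (g j.+1) (ex_intro _ g (conj Sg (conj E erefl))).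
    rewrite leq_eqVlt => /orP [/eqP Eq|lt].
    * right=> k; rewrite leq_eqVlt => /orP [/eqP ->|kj] //.
      rewrite -Ef' ?E //; lia.
    * left; exists j.+1; split=> //; split=> // k kj.
      rewrite -Ef' ?E //; lia.
Qed.

Lemma Prog_ex (V : finType) (p : V -> nat) rho v w : exists m, is_Prog p rho v w m.
Proof.
case: (classic (exists f, inM p (Tup f) /\ prog_cond p rho v w (Tup f))) => [ne|no].
- have [f [Mf Cf] Hf] := lexmin (dd p).-1 ne.
  exists (Tup f); split=> //; split=> // [[|g]] Mg Cg; first by left.
  exact: Hf.
- exists Top; split; first by split.
  split.
  + rewrite /prog_cond; case: (odd (p v)) => /=; case: (rho w) => [|g] /=.
    * by right.
    * by left.
    * by right.
    * by left.
  + move=> [|g] Mg Cg; first by right.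
    exfalso; apply: no; by exists g.
Qed.
Definition cntw (V : finType) (p : V -> nat) (pi : nat -> V) (i n m : nat) : nat :=
  count (fun k => p (pi k) == i) (iota n (m - n)).

Section Cnt.
Variables (V : finType) (p : V -> nat) (pi : nat -> V).

Lemma cntw_split i n L m : n <= L -> L <= m -> cntw p pi i n m = cntw p pi i n L + cntw p pi i L m.
Proof.
move=> nL Lm; rewrite /cntw.
have -> : m - n = (L - n) + (m - L) by lia.
rewrite iotaD count_cat; congr (_ + count _ (iota _ _)); lia.
Qed.

Lemma cntwS i n m : n <= m -> cntw p pi i n m.+1 = cntw p pi i n m + (p (pi m) == i).
Proof.
move=> nm; rewrite (@cntw_split i n m m.+1) //; congr (_ + _).
by rewrite /cntw subSnn /= addn0.
Qed.

Lemma cntw_nn i n : cntw p pi i n n = 0.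
Proof. by rewrite /cntw subnn. Qed.

Lemma cntw0 i n m : (forall k, n <= k < m -> p (pi k) != i) -> cntw p pi i n m = 0.
Proof.
move=> H; rewrite /cntw; apply/eqP; rewrite -leqn0 leqNgt -has_count; apply/hasPn.
move=> k; rewrite mem_iota => /andP [a b]; apply: H; rewrite a /=; lia.
Qed.

Lemma cntw_mono i n m m' : n <= m -> m <= m' -> cntw p pi i n m <= cntw p pi i n m'.
Proof. move=> a b; rewrite (@cntw_split i n m m') //; lia. Qed.

End Cnt.

Section Main.
Variables (V : finType) (p : V -> nat) (pi : nat -> V) (G : nat -> nat -> nat).
Hypothesis Hstep : forall n, le_upto (p (pi n)) (G n.+1) (G n).
Hypothesis Hstrict : forall n, odd (p (pi n)) -> lt_upto (p (pi n)) (G n.+1) (G n).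

Lemma chain i n d : (forall k, n <= k < n + d -> i <= p (pi k)) ->
  le_upto i (add_at i (if odd i then cntw p pi i n (n + d) else 0) (G (n + d))) (G n).
Proof.
elim: d => [|d IH] H.
- rewrite addn0 cntw_nn if_same; right=> k ki; rewrite /add_at; case: (k == i); lia.
- have IH' := IH (fun k kk => H k (ltac:(lia))).
  have Hq := H (n + d) ltac:(lia).
  rewrite addnS cntwS; last lia.
  case Oi: (odd i); rewrite ?Oi in IH'.
  + case: (eqVneq (p (pi (n + d))) i) => Eq.
    * rewrite /= addn1.
      apply: le_trans_u IH'; apply: lt_add.
      have := @Hstrict (n + d); rewrite Eq Oi; by apply.
    * rewrite /= addn0.
      apply: le_trans_u IH'; apply: add_mono; exact: le_mono (Hstep _) Hq.
  + apply: le_trans_u IH'; apply: add_mono; exact: le_mono (Hstep _) Hq.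
Qed.

Lemma chain' i n m : n <= m -> (forall k, n <= k < m -> i <= p (pi k)) ->
  le_upto i (add_at i (if odd i then cntw p pi i n m else 0) (G m)) (G n).
Proof. move=> nm; rewrite -(subnKC nm); exact: chain. Qed.

Lemma Pmain i : forall n (h : nat -> nat), (forall j, ~~ odd j -> h j = 0) ->
  (forall j, odd j -> j <= i -> exists2 m, n <= m &
      (forall k, n <= k < m -> j <= p (pi k)) /\ h j <= cntw p pi j n m) ->
  le_upto i h (G n).
Proof.
elim/ltn_ind: i => i IH n h Hev Hw.
case: (classic (exists L, n <= L /\ p (pi L) < i)) => [HL|HnL].
- have [L [[nL qL] Lmin]] := ex_min_prop HL.
  have Hge : forall k, n <= k < L -> i <= p (pi k).
    move=> k /andP [a b]; rewrite leqNgt; apply/negP => c.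
    have := Lmin k (conj a c); lia.
  have Hz : forall j m, j < i -> m <= L -> cntw p pi j n m = 0.
    move=> j m ji mL; apply: cntw0 => k kk; apply/eqP => E.
    have := Hge k ltac:(lia); lia.
  have HqL : le_upto (p (pi L)) h (G L).
    apply: IH => // j oj jq.
    have [m nm [Hm hj]] := Hw j oj ltac:(lia).
    case: (leqP m L) => mL.
    + exists L => //; split; first lia.
      rewrite Hz in hj; lia.
    + exists m; first lia; split.
      * move=> k kk; apply: Hm; lia.
      * rewrite (@cntw_split _ _ _ j n L m) in hj; try lia.
        rewrite Hz in hj; lia.
  have Hc := chain' nL Hge.
  apply: le_trans_u Hc.
  apply: (lemB (q := p (pi L))) => //.
  + apply: ext_u HqL => k kq; rewrite /add_at.
    have -> : (k == i) = false by apply/eqP; lia. done.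
  + move=> k /andP [qk ki].
    case Ok: (odd k); last by rewrite Hev ?Ok.
    have [m nm [Hm hk]] := Hw k Ok ki.
    have mL : m <= L.
      rewrite leqNgt; apply/negP => Lm; have := Hm L ltac:(lia); lia.
    case: (ltngtP k i) => ki'.
    * rewrite Hz in hk; lia.
    * lia.
    * subst k; rewrite /add_at eqxx Ok.
      have := @cntw_mono _ p pi i n m L nm mL; lia.
- have Hall : forall k, n <= k -> i <= p (pi k).
    move=> k nk; rewrite leqNgt; apply/negP => c; apply: HnL; by exists k.
  have Hz : forall j m, j < i -> cntw p pi j n m = 0.
    move=> j m ji; apply: cntw0 => k kk; apply/eqP => E.
    have := Hall k ltac:(lia); lia.
  have Hlow : forall k, k < i -> h k = 0.
    move=> k ki; case Ok: (odd k); last by rewrite Hev ?Ok.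
    have [m nm [Hm hk]] := Hw k Ok ltac:(lia).
    rewrite Hz in hk; lia.
  case Oi: (odd i).
  + have [m nm [Hm hi]] := Hw i Oi (leqnn i).
    have Hc := chain' nm Hm; rewrite Oi in Hc.
    apply: le_trans_u Hc; apply: P0 => k ki.
    case: (ltngtP k i) => ki'.
    * rewrite Hlow //.
    * lia.
    * subst k; rewrite /add_at eqxx; lia.
  + apply: P0 => k ki.
    case: (ltngtP k i) => ki'.
    * rewrite Hlow //.
    * lia.
    * subst k; rewrite Hev ?Oi //.
Qed.

End Main.
Lemma dec_mono (a : nat -> nat) N : (forall s, N <= s -> a s.+1 <= a s) ->
  forall m, N <= m -> a m <= a N.
Proof.
move=> H; elim=> [|m IH] Nm; first by have -> : N = 0 by lia.
case: (leqP N m) => c; last by have -> : N = m.+1 by lia.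
exact: leq_trans (H m c) (IH c).
Qed.

Lemma stab (a : nat -> nat) N : (forall s, N <= s -> a s.+1 <= a s) ->
  exists N', N <= N' /\ forall m, N' <= m -> a m = a N'.
Proof.
move Hv: (a N) => v; elim/ltn_ind: v N Hv => v IH N Hv H.
case: (classic (forall m, N <= m -> a m = a N)) => [A|A].
- by exists N.
- have [m Hm] := not_all_ex_not _ _ A.
  have [Nm ne] := imply_to_and _ _ Hm.
  have le := dec_mono H Nm.
  have [N' [mN' HN']] := IH (a m) ltac:(lia) m erefl (fun s ms => H s ltac:(lia)).
  exists N'; split=> //; lia.
Qed.

Lemma Fin (V : finType) (p : V -> nat) (pi : nat -> V) m :
  (forall k, k < m -> ~ inf_often p pi k) -> exists N, forall n, N <= n -> m <= p (pi n).
Proof.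
elim: m => [|m IH] H; first by exists 0.
have [N1 H1] := IH (fun k km => H k ltac:(lia)).
have := H m (ltnSn m); rewrite /inf_often => /not_all_ex_not [N2 H2].
exists (maxn N1 N2) => n Nn.
have a := H1 n ltac:(lia).
case: (eqVneq (p (pi n)) m) => [E|ne]; last lia.
exfalso; apply: H2; exists n; split=> //; lia.
Qed.

Lemma lt_dd (V : finType) (p : V -> nat) (x : V) : p x < dd p.
Proof. rewrite /dd ltnS; exact: leq_bigmax. Qed.

Lemma inf_ex (V : finType) (p : V -> nat) (pi : nat -> V) : exists k, inf_often p pi k.
Proof.
apply: NNPP => no.
have [N HN] := @Fin V p pi (dd p) (fun k _ Hk => no (ex_intro _ k Hk)).
have := HN N (leqnn N); have := lt_dd p (pi N); lia.
Qed.

Section EW.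
Variables (V : finType) (p : V -> nat) (pi : nat -> V) (G : nat -> nat -> nat).
Hypothesis Hstep : forall n, le_upto (p (pi n)) (G n.+1) (G n).
Hypothesis Hstrict : forall n, odd (p (pi n)) -> lt_upto (p (pi n)) (G n.+1) (G n).

Lemma evenwins : even_wins p pi.
Proof.
have [k [Ik Mk]] := ex_min_prop (inf_ex p pi).
case Ok: (odd k); last first.
  exists k; split=> //; split; [by rewrite Ok | exact: Mk].
exfalso.
have [N HN] := @Fin V p pi k (fun k' lt Ik' => ltac:(have := Mk k' Ik'; lia)).
have mono : forall j N', j <= k -> N <= N' ->
    (forall m, N' <= m -> forall c, c < j -> G m c = G N' c) ->
    forall s, N' <= s -> G s.+1 j <= G s j.
  move=> j N' jk NN' Hc s sN'.
  apply: (coord_mono (Hstep s)); first by have := HN s ltac:(lia); lia.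
  move=> c cj; rewrite Hc ?(Hc s) //; lia.
have Z : forall j, j <= k.+1 -> exists N', N <= N' /\
    forall m, N' <= m -> forall c, c < j -> G m c = G N' c.
  elim=> [|j IH] jk; first by exists N; split=> // m _ c; rewrite ltn0.
  have [Nj [NNj Hj]] := IH ltac:(lia).
  have [N' [NjN' HN']] := stab (mono j Nj ltac:(lia) NNj Hj).
  exists N'; split; first lia.
  move=> m mN' c; rewrite ltnS leq_eqVlt => /orP [/eqP ->|cj].
  - exact: HN'.
  - rewrite Hj ?(Hj N') //; lia.
have [N' [_ HN']] := Z k.+1 (leqnn _).
have [s [sN' ps]] := Ik N'.
have := @Hstrict s; rewrite ps Ok => /(_ isT) [d [dk [_ B]]].
rewrite HN' ?(HN' s) in B; lia.
Qed.
End EW.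

Lemma theta_entry_ex (V : finType) (p : V -> nat) (pi : nat -> V) i :
  even_wins p pi -> odd i -> exists c, theta_entry p pi i c.
Proof.
move=> [k [Ik [Ek Mk]]] Oi.
case: (classic (exists n, idom_prefix p pi i n)) => [ne|no]; last first.
  exists 0; right; split=> // n Hn; apply: no; by exists n.
have [B HB] : exists B, forall n, idom_prefix p pi i n -> degree p pi i n <= B.
  case: (classic (inf_often p pi i)) => [Ii|Ni].
  - have ki := Mk i Ii.
    have ki' : k < i by move: ki; rewrite leq_eqVlt => /orP [/eqP E|//]; subst; rewrite Oi in Ek.
    have [L [_ pL]] := Ik 0.
    exists (cntw p pi i 0 L) => n [n0 [_ Hn]].
    have nL : n <= L by rewrite leqNgt; apply/negP => Ln; have := Hn L Ln; lia.
    have -> : degree p pi i n = cntw p pi i 0 n by rewrite /degree /cntw subn0.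
    exact: cntw_mono.
  - have [N HN] := not_all_ex_not _ _ Ni.
    exists (cntw p pi i 0 N) => n _.
    have -> : degree p pi i n = cntw p pi i 0 n by rewrite /degree /cntw subn0.
    case: (leqP n N) => nN; first exact: cntw_mono.
    rewrite (@cntw_split _ _ _ i 0 N n) // ?(ltnW nN) //.
    rewrite (@cntw0 _ _ _ i N n); first by rewrite addn0.
    move=> k0 kk; apply/eqP => E; apply: HN; exists k0; split=> //; lia.
have [c [[n [Hn Dn]] Hmax]] := @ex_max_prop (fun c => exists n, idom_prefix p pi i n /\ degree p pi i n = c) B
  (let: ex_intro n Hn := ne in ex_intro _ _ (ex_intro _ n (conj Hn erefl)))
  (fun c '(ex_intro n (conj Hn Dn)) => ltac:(rewrite -Dn; exact: HB n Hn)).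
exists c; left; exists n; split=> //; split=> // n' Hn'.
exact: Hmax (ex_intro _ n' (conj Hn' erefl)).
Qed.

Lemma theta_ex (V : finType) (p : V -> nat) (pi : nat -> V) : even_wins p pi ->
  exists f, (forall i, odd i -> i < dd p -> theta_entry p pi i (f i)) /\
            (forall i, (~~ odd i \/ dd p <= i) -> f i = 0).
Proof.
move=> ew.
have H : forall i, exists c, (odd i -> i < dd p -> theta_entry p pi i c) /\
                          ((~~ odd i \/ dd p <= i) -> c = 0).
  move=> i; case: (boolP (odd i && (i < dd p))) => [/andP [oi id]|].
  - have [c Hc] := theta_entry_ex ew oi; exists c; split=> // [[/negP //|]]; lia.
  - rewrite negb_and -leqNgt => nn; exists 0; split=> // oi id.
    exfalso; move: nn; rewrite oi /=; lia.
exists (fun i => proj1_sig (constructive_indefinite_description _ (H i))).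
split=> i; case: (constructive_indefinite_description _ (H i)) => c [A B] /=; [exact: A|exact: B].
Qed.
Lemma step_rel (V : finType) (p : V -> nat) rho u w :
  (forall m, is_Prog p rho u w m -> mle (p u) m (rho u)) ->
  (~~ odd (p u) -> mle (p u) (rho w) (rho u)) /\
  (odd (p u) -> mlt (p u) (rho w) (rho u) \/ (rho u = Top /\ rho w = Top)).
Proof.
move=> H; have [m Pm] := Prog_ex p rho u w.
have Hm := H m Pm; case: Pm => _ [C _]; move: m C Hm; rewrite /prog_cond => m.
case: (odd (p u)) => /= C Hm; split=> // _; move: C Hm; case: (rho w) => [|f]; case: m => [|g];
  case: (rho u) => [|h]; rewrite /mle /mlt /meq /=; try by intuition discriminate.
- move=> [A|[]] // B; left; exact: lt_le_u A B.
- move=> A B; exact: le_trans_u A B.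
Qed.


Theorem lemma1 (V : finType) (E : rel V) (isEven : pred V) (p : V -> nat)
  (E_total : forall v, exists w, E v w)
  (rho : V -> mval)
  (Hrho : game_progress_measure E isEven p rho) :
  forall v : V, exists sigma : V -> V,
    positional_strategy_E E isEven sigma /\
    forall pi : nat -> V,
      pi 0 = v -> is_play E pi -> consistent_E isEven sigma pi ->
      exists t, is_theta p pi t /\ mle_full p t (rho v).
Proof.
move=> v.
case: Hrho => [HM [HE HO]].
have Hs : forall u, exists w, E u w /\
    (isEven u -> forall m, is_Prog p rho u w m -> mle (p u) m (rho u)).
  move=> u; case: (boolP (isEven u)) => eu.
  - have [w Ew Hw] := HE u eu; by exists w.
  - have [w Ew] := E_total u; exists w; split=> //; by rewrite (negbTE eu).
pose sigma u := proj1_sig (constructive_indefinite_description _ (Hs u)).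
have Hsig : forall u, E u (sigma u) /\
    (isEven u -> forall m, is_Prog p rho u (sigma u) m -> mle (p u) m (rho u)).
  move=> u; rewrite /sigma; by case: (constructive_indefinite_description _ (Hs u)).
exists sigma; split; first by move=> u _; case: (Hsig u).
move=> pi pi0 Hplay Hcons.
have Hloc : forall n m, is_Prog p rho (pi n) (pi n.+1) m -> mle (p (pi n)) m (rho (pi n)).
  move=> n; case: (boolP (isEven (pi n))) => eu.
  - rewrite (Hcons n eu); exact: (proj2 (Hsig _) eu).
  - exact: HO _ eu _ (Hplay n).
have SR := fun n => step_rel (Hloc n).
have Hth : ~ odd_wins p pi -> exists f, is_theta p pi (Tup f).
  move=> now; have ew : even_wins p pi by apply: NNPP.
  have [f [A B]] := theta_ex ew.
  exists f; right; split=> //; by exists f.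
case Hv: (rho v) => [|f0].
- case: (classic (odd_wins p pi)) => ow.
  + exists Top; split; first by left.
    by right.
  + have [f Hf] := Hth ow; exists (Tup f); split=> //; by left.
- have allT : forall n, exists g, rho (pi n) = Tup g.
    elim=> [|n [g IH]]; first by rewrite pi0 Hv; exists f0.
    have [A B] := SR n; move: A B; rewrite IH.
    case: (rho (pi n.+1)) => [|g']; last by exists g'.
    case: (odd (p (pi n))) => /=.
    * by move=> _ /(_ isT) [//|[]].
    * by move=> /(_ isT) [].
  pose G n := match rho (pi n) with Tup g => g | Top => fun _ => 0 end.
  have HG : forall n, rho (pi n) = Tup (G n).
    by move=> n; rewrite /G; have [g ->] := allT n.
  have Hstep : forall n, le_upto (p (pi n)) (G n.+1) (G n).
    move=> n; have [A B] := SR n; move: A B; rewrite !HG.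
    case: (odd (p (pi n))) => /= A B.
    + by case: (B isT) => [C|[]]; left.
    + exact: A.
  have Hstrict : forall n, odd (p (pi n)) -> lt_upto (p (pi n)) (G n.+1) (G n).
    move=> n on; have [_ B] := SR n; move: B; rewrite !HG.
    by case/(_ on) => [//|[]].
  have ew := evenwins Hstep Hstrict.
  have [f [A B]] := theta_ex ew.
  exists (Tup f); split.
    right; split; first by move=> ow; apply: ow.
    by exists f.
  have G0 : f0 = G 0 by move: (HG 0); rewrite pi0 Hv => [[]].
  rewrite G0 /mle_full.
  have dd0 : 0 < dd p by rewrite /dd.
  apply: (Pmain Hstep Hstrict) => [j ej|j oj jd].
  + by apply: B; left.
  + case: (A j oj ltac:(lia)) => [[n [[n0 [_ Hn]] [Dn _]]]|[_ ->]].
    * exists n => //; split; first by move=> k /andP [_ kn]; apply: Hn.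
      by rewrite -Dn /degree /cntw subn0.
    * by exists 0.
Qed.
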